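(* For every long virtual knot diagram $K$ with $m>0$ singular crossings (chords), there exist a regular twist lattice $\Phi_K:\mathbb{Z}^m\to\mathscr{K}$, $\alpha\in(\mathbb{Z}_{\ge 0})^m$ and $\nu\in\{+,-\}^m$ such that $\partial^{\nu\alpha}\Phi_K(\vec 0)=K$ as elements of $\mathbb{Z}[\mathscr{K}]$.
   Context: Long virtual knots: a long virtual knot diagram is a generic immersion $\mathbb{R}\to\mathbb{R}^2$, standard outside a compact set, oriented along the positive $x$-direction, with double points marked classical (over/under), virtual, or singular; $\mathscr{K}$ is the set of equivalence classes of diagrams without singular crossings. A diagram with singular crossings is regarded as an element of $\mathbb{Z}[\mathscr{K}]$ via $K_\times=K_+-K_-$ at each singular crossing. Gauss diagram: $\mathbb{R}$ with, for each classical crossing with preimages $x<y$, an arrow between $x$ and $y$ pointing right if the overcrossing is at $x$, left otherwise, labelled by its writhe sign; singular crossings are drawn as (signed) chords. Discrete derivatives: for $\Phi:\mathbb{Z}^m\to\mathbb{Z}[\mathscr{K}]$, $(\partial_i^+\Phi)(z)=\Phi(z+e_i)-\Phi(z)$, $(\partial_i^-\Phi)(z)=\Phi(z)-\Phi(z-e_i)$; for $a\ge0$, $\partial_i^{a}$ and $\partial_i^{-a}$ are the $a$-fold iterates of $\partial_i^+$ and $\partial_i^-$ (with $\partial_i^0=\mathrm{id}$); for $\alpha\in(\mathbb{Z}_{\ge0})^m$, $\nu\in\{+,-\}^m$, $\partial^{\nu\alpha}=\partial_1^{\nu_1\alpha_1}\cdots\partial_m^{\nu_m\alpha_m}$. Regular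 twist lattices: a proper pair is a pair of disjoint open intervals $A<A'$ of $\mathbb{R}$ such that every arrow or chord with an endpoint in $A\cup A'$ has one endpoint in each. Given $Y\in\{S,B\}$, $Z\in\{L,R\}$, a $p$-configuration in $(A,A')$ consists of $p$ arrows with endpoints $a_1<\dots<a_p$ in $A$, $b_1<\dots<b_p$ in $A'$, arrow $i$ joining $a_i$ to $b_i$ ($Y=S$) or $b_{p+1-i}$ ($Y=B$). A regular twist sequence of type $OYZ$ (resp. $EYZ$) with pair $(A,A')$ assigns to $k\in\mathbb{Z}$ a $p$-configuration with $p=|2k-1|$ (resp. $|2k|$), all arrows signed $+$ if $k\ge1$ and $-$ if $k\le0$, directions alternating with arrow $1$ pointing in direction $Z$ if $k\ge 1$ and opposite to $Z$ if $k\le0$. A regular twist lattice of dimension $m$ is $\Phi:\mathbb{Z}^m\to\mathscr{K}$ given by a fixed diagram $G$ and disjoint proper pairs $(A_i,A_i')$, $1\le i\le m$, free of endpoints of $G$, with $\Phi(k_1,\dots,k_m)$ equal to $G$ plus, in each $(A_i,A_i')$, the $k_i$-th configuration of a regular twist sequence of some type $OYZ$ or $EYZ$. *)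

(* Defs.v *)
(* Long virtual knots are modelled by their Gauss diagrams
   on the line (endpoints in rat; only their relative order matters) modulo
   the Gauss-diagram Reidemeister moves. *)
From Stdlib Require Import Relation_Operators.
From HB Require Import structures.
From mathcomp Require Import all_boot all_order all_algebra.
From mathcomp Require Import boolp.
Set Implicit Arguments. Unset Strict Implicit. Unset Printing Implicit Defensive.
Import Order.TTheory GRing.Theory Num.Theory.
Local Open Scope ring_scope.

(* An arrow (o, u, s): overcrossing preimage o, undercrossing preimage u,
   writhe sign s (true = +).  It points from o to u. *)
Definition arrow := (rat * rat * bool)%type.
Definition ov (a : arrow) : rat := a.1.1.
Definition un (a : arrow) : rat := a.1.2.
Definition sgn (a : arrow) : bool := a.2.

Definition gdiag := seq arrow.

Definition endpoints (D : gdiag) : seq rat :=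
  flatten [seq [:: ov a; un a] | a <- D].

Definition gwf (D : gdiag) : bool := uniq (endpoints D).

Definition sbetween (x y z : rat) : bool := ((x < z) && (z < y)) || ((y < z) && (z < x)).

Definition adjacent (D : gdiag) (x y : rat) : bool :=
  all (fun z => ~~ sbetween x y z) (endpoints D).

Definition sgz (b : bool) : int := if b then 1 else -1.

(* Three strands 1,2,3; pij is the preimage on strand i of its crossing with
   strand j; oij : strand i over strand j (for the cyclic pairs 12,23,31);
   eij : writhe sign of that crossing. *)
Definition r3_arrows (p12 p13 p21 p23 p31 p32 : rat)
  (o12 o23 o31 e12 e23 e31 : bool) : gdiag :=
  [:: if o12 then (p12, p21, e12) else (p21, p12, e12);
      if o23 then (p23, p32, e23) else (p32, p23, e23);
      if o31 then (p31, p13, e31) else (p13, p31, e31)].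

(* Realizability of an Omega_3 configuration: the heights are a total order
   (no cyclic over-relation) and the signs satisfy
   e_ij = s * h_ij * a_i * a_j for a common s, where a_i records the order of
   the two points on strand i (a_1 : p13 < p12, a_2 : p21 < p23,
   a_3 : p32 < p31). *)
Definition r3_ok (p12 p13 p21 p23 p31 p32 : rat)
  (o12 o23 o31 e12 e23 e31 : bool) : Prop :=
  let a1 := p13 < p12 in let a2 := p21 < p23 in let a3 := p32 < p31 in
  ~~ [&& o12 == o23 & o23 == o31] /\
  sgz e12 * sgz o12 * sgz a1 * sgz a2 = sgz e23 * sgz o23 * sgz a2 * sgz a3 /\
  sgz e23 * sgz o23 * sgz a2 * sgz a3 = sgz e31 * sgz o31 * sgz a3 * sgz a1.

Definition move (D D' : gdiag) : Prop :=
  (* relabelling of the arrows *)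
  perm_eq D D' \/
  (* isotopy of the line (order-preserving change of endpoints) *)
  (exists f : rat -> rat,
      {in endpoints D &, forall x y, x < y -> f x < f y} /\
      D' = [seq (f (ov a), f (un a), sgn a) | a <- D]) \/
  (* Omega_1: an arrow with adjacent endpoints, any direction and sign *)
  (exists x, D' = x :: D /\ adjacent D' (ov x) (un x)) \/
  (* Omega_2: two arrows of opposite signs, tails adjacent, heads adjacent *)
  (exists x1 x2, D' = x1 :: x2 :: D /\ sgn x1 != sgn x2 /\
      adjacent D' (ov x1) (ov x2) /\ adjacent D' (un x1) (un x2)) \/
  (* Omega_3: reverse the order of the points on each of the three segments *)
  (exists (E : gdiag) (p12 p13 p21 p23 p31 p32 : rat) (o12 o23 o31 e12 e23 e31 : bool),
      D = r3_arrows p12 p13 p21 p23 p31 p32 o12 o23 o31 e12 e23 e31 ++ E /\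
      D' = r3_arrows p13 p12 p23 p21 p32 p31 o12 o23 o31 e12 e23 e31 ++ E /\
      r3_ok p12 p13 p21 p23 p31 p32 o12 o23 o31 e12 e23 e31 /\
      adjacent D p12 p13 /\ adjacent D p21 p23 /\ adjacent D p31 p32).

Definition step (D D' : gdiag) : Prop := gwf D /\ gwf D' /\ move D D'.

(* equivalence of long virtual knot diagrams; classes = the set \mathscr{K} *)
Definition gequiv : gdiag -> gdiag -> Prop := clos_refl_sym_trans gdiag step.

Definition combo := seq (int * gdiag).

(* equality in the free abelian group Z[\mathscr{K}] on equivalence classes *)
Definition zeq (c1 c2 : combo) : Prop :=
  forall D : gdiag,
    \sum_(x <- c1 | `[< gequiv x.2 D >]) x.1 = \sum_(x <- c2 | `[< gequiv x.2 D >]) x.1.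

Definition cneg (c : combo) : combo := [seq (- x.1, x.2) | x <- c].

(* A singular chord (x, y): its positive resolution K_+ is the arrow (x,y,+)
   (overcrossing at x), its negative resolution K_- is (y,x,-). *)
Record sdiag := SDiag { sarrows : gdiag; schords : seq (rat * rat) }.

Definition swf (K : sdiag) : bool :=
  uniq (endpoints (sarrows K) ++ flatten [seq [:: c.1; c.2] | c <- schords K]).

Fixpoint resolve_aux (D : gdiag) (cs : seq (rat * rat)) : combo :=
  match cs with
  | [::] => [:: (1, D)]
  | c :: cs' => resolve_aux (rcons D (c.1, c.2, true)) cs'
                ++ cneg (resolve_aux (rcons D (c.2, c.1, false)) cs')
  end.

(* the element of Z[\mathscr{K}] given by K, via K_x = K_+ - K_- *)
Definition resolve (K : sdiag) : combo := resolve_aux (sarrows K) (schords K).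

Section Deriv.
Variable m : nat.
Definition zshift (z : 'I_m -> int) (i : 'I_m) (d : int) : 'I_m -> int :=
  fun j => if j == i then z j + d else z j.
Definition dplus (i : 'I_m) (F : ('I_m -> int) -> combo) : ('I_m -> int) -> combo :=
  fun z => F (zshift z i 1) ++ cneg (F z).
Definition dminus (i : 'I_m) (F : ('I_m -> int) -> combo) : ('I_m -> int) -> combo :=
  fun z => F z ++ cneg (F (zshift z i (-1))).
(* nu i = true means +, false means - *)
Definition diter (i : 'I_m) (nu : bool) (a : nat) (F : ('I_m -> int) -> combo) :=
  iter a (if nu then dplus i else dminus i) F.
(* \partial^{nu alpha} = \partial_1^{nu_1 alpha_1} ... \partial_m^{nu_m alpha_m} *)
Definition dderiv (nu : 'I_m -> bool) (alpha : 'I_m -> nat)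
  (F : ('I_m -> int) -> combo) : ('I_m -> int) -> combo :=
  foldr (fun i G => diter i (nu i) (alpha i) G) F (enum 'I_m).
End Deriv.

Definition inI (I : rat * rat) (x : rat) : bool := (I.1 < x) && (x < I.2).
Definition disjI (I J : rat * rat) : bool := (I.2 <= J.1) || (J.2 <= I.1).

(* number of arrows of the k-th configuration; typ_O = true for type O *)
Definition tw_p (typ_O : bool) (k : int) : nat :=
  if typ_O then absz (2 * k - 1)%R else absz (2 * k)%R.

(* the j-th of p evenly spaced points of I (j = 1..p) *)
Definition pt (I : rat * rat) (p j : nat) : rat :=
  I.1 + (I.2 - I.1) * (j%:R / (p.+1)%:R).

(* k-th configuration of a regular twist sequence of type (O|E) Y Z in (A,A');
   typ_S : Y = S, typ_R : Z = R.  Arrow j (1-based) joins a_j to b_j (S) or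
   b_{p+1-j} (B); pointing right means overcrossing at a_j. *)
Definition twist_config (A A' : rat * rat) (typ_O typ_S typ_R : bool) (k : int) : gdiag :=
  let p := tw_p typ_O k in
  let pos := (1 <= k) in
  let r0 := if pos then typ_R else ~~ typ_R in
  [seq (let a := pt A p j in
        let b := pt A' p (if typ_S then j else (p.+1 - j)%N) in
        let right := if odd j then r0 else ~~ r0 in
        if right then (a, b, pos) else (b, a, pos)) | j <- iota 1 p].

Record tl_data (m : nat) := TL {
  tlG : gdiag;
  tlA : 'I_m -> rat * rat;
  tlA' : 'I_m -> rat * rat;
  tlO : 'I_m -> bool;  (* type O (true) or E (false) *)
  tlS : 'I_m -> bool;  (* Y = S (true) or B (false) *)
  tlR : 'I_m -> bool   (* Z = R (true) or L (false) *)
}.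

Definition tl_ok (m : nat) (L : tl_data m) : Prop :=
  gwf (tlG L) /\
  (forall i, (tlA L i).1 < (tlA L i).2 /\ (tlA L i).2 <= (tlA' L i).1 /\
             (tlA' L i).1 < (tlA' L i).2) /\
  (forall i j, i != j ->
     [&& disjI (tlA L i) (tlA L j), disjI (tlA L i) (tlA' L j),
         disjI (tlA' L i) (tlA L j) & disjI (tlA' L i) (tlA' L j)]) /\
  (forall i x, x \in endpoints (tlG L) -> ~~ inI (tlA L i) x && ~~ inI (tlA' L i) x).

Definition lattice_diag (m : nat) (L : tl_data m) (z : 'I_m -> int) : gdiag :=
  tlG L ++ flatten [seq twist_config (tlA L i) (tlA' L i) (tlO L i) (tlS L i) (tlR L i) (z i)
                   | i <- enum 'I_m].

Definition lattice_fun (m : nat) (L : tl_data m) : ('I_m -> int) -> combo :=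
  fun z => [:: (1, lattice_diag L z)].

(* Main.v *)
Require Import Defs.
From HB Require Import structures.
From mathcomp Require Import all_boot all_order all_algebra.
From mathcomp Require Import boolp ring lra.
Import Order.TTheory GRing.Theory Num.Theory.
Local Open Scope ring_scope.

Definition clo (c : rat * rat) := if c.1 < c.2 then c.1 else c.2.
Definition chi (c : rat * rat) := if c.1 < c.2 then c.2 else c.1.

Lemma pt_mid (u e : rat) : pt (u - e, u + e) 1 1 = u.
Proof. rewrite /pt /=. by field. Qed.

Lemma tc1 (c : rat * rat) (e : rat) :
  twist_config (clo c - e, clo c + e) (chi c - e, chi c + e) true true (c.1 < c.2) 1
  = [:: (c.1, c.2, true)].
Proof.
rewrite /twist_config /tw_p /=. rewrite !pt_mid /clo /chi.
by case: (c.1 < c.2).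
Qed.

Lemma tc0 (c : rat * rat) (e : rat) :
  twist_config (clo c - e, clo c + e) (chi c - e, chi c + e) true true (c.1 < c.2) 0
  = [:: (c.2, c.1, false)].
Proof.
rewrite /twist_config /tw_p /=. rewrite !pt_mid /clo /chi.
by case: (c.1 < c.2).
Qed.

Lemma deriv_gen (m : nat) (G : gdiag) (tc : 'I_m -> int -> gdiag) (ch : 'I_m -> rat * rat)
  (h1 : forall i, tc i 1 = [:: ((ch i).1, (ch i).2, true)])
  (h0 : forall i, tc i 0 = [:: ((ch i).2, (ch i).1, false)]) :
  forall s p (z : 'I_m -> int), p ++ s = enum 'I_m -> (forall j, j \in s -> z j = 0) ->
  foldr (fun i H => dplus i H)
     (fun z => [:: (1, G ++ flatten [seq tc i (z i) | i <- enum 'I_m])]) s z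
  = resolve_aux (G ++ flatten [seq tc i (z i) | i <- p]) [seq ch i | i <- s].
Proof.
elim=> [|i s IH] p z hp hz /=.
  by rewrite -hp cats0.
have hu : uniq (p ++ i :: s) by rewrite hp enum_uniq.
rewrite cat_uniq /= negb_or in hu; case/and4P: hu => _ /andP [hpi' _] his _.
rewrite /dplus.
rewrite (IH (rcons p i) (zshift z i 1)); last first.
- move=> j hj; rewrite /zshift; case: eqP => [eji|_]; last by apply: hz; rewrite inE hj orbT.
  by move: his; rewrite -eji hj.
- by rewrite cat_rcons.
rewrite (IH (rcons p i) z); last first.
- by move=> j hj; apply: hz; rewrite inE hj orbT.
- by rewrite cat_rcons.
have e1 : [seq tc i0 (zshift z i 1 i0) | i0 <- p] = [seq tc i0 (z i0) | i0 <- p].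
  apply/eq_in_map => j hj; rewrite /zshift; case: eqP => // eji.
  by move: hpi'; rewrite -eji hj.
rewrite !map_rcons !flatten_rcons e1 /zshift eqxx hz ?mem_head // add0r h1 h0.
by rewrite !catA !cats1.
Qed.

Lemma min_ex (a b : rat) : 0 < a -> 0 < b -> exists c, [/\ 0 < c, c <= a & c <= b].
Proof.
move=> ha hb; case: (leP a b) => hab.
  by exists a; split => //.
by exists b; split => //; apply: ltW.
Qed.

Lemma gap_pt (x : rat) (P : seq rat) :
  exists2 d, 0 < d & forall y, y \in P -> y != x -> (x + d <= y) \/ (y + d <= x).
Proof.
elim: P => [|y P [d hd IH]]; first by exists 1 => //.
case: (ltgtP x y) => hxy.
- have [c [hc1 hc2 hc3]] : exists c, [/\ 0 < c, c <= d & c <= y - x].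
    by apply: min_ex => //; lra.
  exists c => // w; rewrite inE => /orP [/eqP -> _|hw hwx]; first by left; lra.
  by case: (IH w hw hwx) => h; [left|right]; lra.
- have [c [hc1 hc2 hc3]] : exists c, [/\ 0 < c, c <= d & c <= x - y].
    by apply: min_ex => //; lra.
  exists c => // w; rewrite inE => /orP [/eqP -> _|hw hwx]; first by right; lra.
  by case: (IH w hw hwx) => h; [left|right]; lra.
- exists d => // w; rewrite inE => /orP [/eqP ->|hw hwx]; first by rewrite hxy eqxx.
  exact: IH.
Qed.

Lemma gap (P : seq rat) :
  exists2 e, 0 < e & forall x y, x \in P -> y \in P -> x != y ->
    (x + e + e <= y) \/ (y + e + e <= x).
Proof.
elim: P => [|x P [e he IH]]; first by exists 1.
have [d hd hx] := gap_pt x P.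
have [c [hc1 hc2 hc3]] : exists c, [/\ 0 < c, c <= e & c <= d / 2].
  by apply: min_ex => //; lra.
exists c => // u v; rewrite !inE => /orP [/eqP ->|hu] /orP [/eqP ->|hv] huv.
- by rewrite eqxx in huv.
- by rewrite eq_sym in huv; case: (hx v hv huv) => h; [left|right]; lra.
- by case: (hx u hu huv) => h; [right|left]; lra.
- by case: (IH u v hu hv huv) => h; [left|right]; lra.
Qed.

Lemma chord_dist (s : seq (rat * rat)) :
  uniq (flatten [seq [:: c.1; c.2] | c <- s]) -> forall i j, (i < size s)%N -> (j < size s)%N ->
  i != j -> forall x y, x \in [:: (nth (0,0) s i).1; (nth (0,0) s i).2] ->
  y \in [:: (nth (0,0) s j).1; (nth (0,0) s j).2] -> x != y.
Proof.
elim: s => [|c s IH] //= /andP [h1 /andP [h2 hu]] [|i] [|j] //= hi hj hij x y hx hy.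
- have hy' : y \in flatten [seq [:: c0.1; c0.2] | c0 <- s].
    by apply/flatten_mapP; exists (nth (0,0) s j) => //; apply: mem_nth.
  apply/negP => /eqP hxy; move: hx; rewrite hxy !inE => /orP [] /eqP hyc.
    by move: h1; rewrite -hyc inE hy' orbT.
  by move: h2; rewrite -hyc hy'.
- have hx' : x \in flatten [seq [:: c0.1; c0.2] | c0 <- s].
    by apply/flatten_mapP; exists (nth (0,0) s i) => //; apply: mem_nth.
  apply/negP => /eqP hxy; move: hy; rewrite -hxy !inE => /orP [] /eqP hyc.
    by move: h1; rewrite -hyc inE hx' orbT.
  by move: h2; rewrite -hyc hx'.
- exact: (IH hu i j).
Qed.

Lemma chord_ne (s : seq (rat * rat)) :
  uniq (flatten [seq [:: c.1; c.2] | c <- s]) -> forall i, (i < size s)%N ->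
  (nth (0,0) s i).1 != (nth (0,0) s i).2.
Proof.
elim: s => [|c s IH] //= /andP [h1 /andP [h2 hu]] [|i] //= hi.
  by apply/negP => /eqP e; move: h1; rewrite e mem_head.
exact: IH.
Qed.

Lemma disj_lem (u v e : rat) : (u + e + e <= v) \/ (v + e + e <= u) ->
  disjI (u - e, u + e) (v - e, v + e).
Proof.
by rewrite /disjI /= => [[h|h]]; apply/orP; [left|right]; lra.
Qed.

Lemma notin_lem (u x e : rat) : (u + e + e <= x) \/ (x + e + e <= u) -> 0 < e ->
  ~~ inI (u - e, u + e) x.
Proof.
by rewrite /inI /= => h he; apply/negP => /andP [h1 h2]; case: h; lra.
Qed.

Lemma clo_in c : clo c \in [:: c.1; c.2].
Proof. by rewrite /clo; case: ifP; rewrite !inE eqxx ?orbT. Qed.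
Lemma chi_in c : chi c \in [:: c.1; c.2].
Proof. by rewrite /chi; case: ifP; rewrite !inE eqxx ?orbT. Qed.
Lemma clo_le c : clo c <= chi c.
Proof. by rewrite /clo /chi; case: ifP => h; [apply: ltW|rewrite leNgt h]. Qed.
Lemma clo_ne c : c.1 != c.2 -> clo c != chi c.
Proof. by rewrite /clo /chi; case: ifP => _ // h; rewrite eq_sym. Qed.

Theorem lemma5 (K : sdiag) :
  swf K -> (0 < size (schords K))%N ->
  exists L : tl_data (size (schords K)), tl_ok L /\
    exists (alpha : 'I_(size (schords K)) -> nat) (nu : 'I_(size (schords K)) -> bool),
      zeq (dderiv nu alpha (lattice_fun L) (fun _ => 0)) (resolve K).
Proof.
move=> hwf _.
set P := endpoints (sarrows K) ++ flatten [seq [:: c.1; c.2] | c <- schords K].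
have [e he hgap] := gap P.
set ch := fun i : 'I_(size (schords K)) => nth (0,0) (schords K) i.
move: hwf; rewrite /swf -/P => hP.
have hP' := hP; rewrite cat_uniq in hP'; case/and3P: hP' => hG hnh hC.
have inP : forall i x, x \in [:: (ch i).1; (ch i).2] -> x \in P.
  move=> i x hx; rewrite mem_cat; apply/orP; right.
  by apply/flatten_mapP; exists (ch i) => //; apply: mem_nth.
exists (TL (sarrows K) (fun i => (clo (ch i) - e, clo (ch i) + e))
          (fun i => (chi (ch i) - e, chi (ch i) + e)) (fun _ => true) (fun _ => true)
          (fun i => (ch i).1 < (ch i).2)).
split.
  split => //=; split.
    move=> i; have hne := clo_ne _ (chord_ne _ hC _ (ltn_ord i)).
    have := hgap _ _ (inP i _ (clo_in _)) (inP i _ (chi_in _)) hne.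
    have := clo_le (ch i).
    by move=> hl [h|h]; split; lra.
  split.
    move=> i j hij.
    have hd : forall x y, x \in [:: (ch i).1; (ch i).2] -> y \in [:: (ch j).1; (ch j).2] ->
         disjI (x - e, x + e) (y - e, y + e).
      move=> x y hx hy; apply: disj_lem.
      exact: (hgap _ _ (inP i _ hx) (inP j _ hy) (chord_dist _ hC _ _ (ltn_ord i) (ltn_ord j) hij _ _ hx hy)).
    by rewrite !hd ?clo_in ?chi_in.
  move=> i x hx.
  have hn : forall u, u \in [:: (ch i).1; (ch i).2] -> ~~ inI (u - e, u + e) x.
    move=> u hu; apply: notin_lem => //; apply: hgap; first exact: inP hu.
      by rewrite mem_cat hx.
    apply/negP => /eqP hux; move/negP: hnh; apply; apply/hasP; exists u.
      by apply/flatten_mapP; exists (ch i) => //; apply: mem_nth.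
    by rewrite hux.
  by rewrite !hn ?clo_in ?chi_in.
exists (fun _ => 1%N), (fun _ => true).
suff -> : dderiv (fun _ => true) (fun _ => 1%N)
    (lattice_fun (TL (sarrows K) (fun i => (clo (ch i) - e, clo (ch i) + e))
          (fun i => (chi (ch i) - e, chi (ch i) + e)) (fun _ => true) (fun _ => true)
          (fun i => (ch i).1 < (ch i).2))) (fun _ => 0) = resolve K by [].
have := deriv_gen _ (sarrows K)
  (fun i k => twist_config (clo (ch i) - e, clo (ch i) + e)
          (chi (ch i) - e, chi (ch i) + e) true true ((ch i).1 < (ch i).2) k)
  ch (fun i => tc1 (ch i) e) (fun i => tc0 (ch i) e)
  (enum 'I_(size (schords K))) [::] (fun _ => 0) erefl (fun _ _ => erefl).
rewrite /= cats0 => h.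
have hmap : [seq ch i | i <- enum 'I_(size (schords K))] = schords K.
  rewrite /ch (map_comp (nth (0,0) (schords K)) val) val_enum_ord.
  exact: (mkseq_nth (0,0) (schords K)).
rewrite hmap in h; rewrite /resolve -h.
by [].
Qed.
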